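(* Let $G$ be a finite group, and let $f:G \to \{\pm 1\}$ be a function with $\mathbb{E}_{x \in G} f(x) = 0$. Then \[ \Pr_{x,y}\,[f(x)f(y) = f(xy)] \le \frac{1}{2}\left(1 + \frac{1}{\sqrt{d}}\right), \] where $x,y$ are chosen uniformly and independently from $G$, and $d = \min_{\rho \ne 1} d_\rho$ is the minimum dimension of a nontrivial irreducible (complex) representation $\rho$ of $G$.
   Context: $d_\rho$ denotes the dimension of the representation $\rho$; the minimum is over nontrivial irreducible complex representations of $G$. $\mathbb{E}$ denotes the average over the uniform distribution on $G$. *)

(* Defs.v *)
From HB Require Import structures.
From mathcomp Require Import all_boot all_order all_algebra all_fingroup all_solvable all_field all_character.
Set Implicit Arguments. Unset Strict Implicit. Unset Printing Implicit Defensive.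
Import Order.TTheory GRing.Theory Num.Theory.
Local Open Scope ring_scope.

(* d is the minimum degree chi(1) of a nontrivial irreducible complex
   character of G (index 0 of irr G is the principal character). *)
Definition is_min_nontrivial_degree (gT : finGroupType) (G : {group gT}) (d : algC) : Prop :=
  (exists2 i : Iirr G, i != 0 & d = 'chi_i 1%g) /\
  (forall i : Iirr G, i != 0 -> d <= 'chi_i 1%g).

Definition mult_prob (gT : finGroupType) (G : {group gT}) (f : gT -> algC) : algC :=
  #|[set p in setX G G | f p.1 * f p.2 == f (p.1 * p.2)%g]|%:R / (#|G|%:R ^+ 2).

(* Main.v *)
Require Import Defs.
From HB Require Import structures.
From mathcomp Require Import all_boot all_order all_algebra all_fingroup all_solvable all_field all_character.
From mathcomp Require Import ring.
Set Implicit Arguments. Unset Strict Implicit. Unset Printing Implicit Defensive.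
Import Order.TTheory GRing.Theory Num.Theory.
Local Open Scope ring_scope.
Local Open Scope sesquilinear_scope.
Section Spec.
Variables (n : nat) (Mx : 'M[algC]_n).
Let H := Mx *m Mx^t*.
Let P := spectralmx H.
Let D := spectral_diag H.
Local Notation dot := (@dotmx algC n).

Lemma tr_trC m p (A : 'M[algC]_(m, p)) : A^t*^t* = A.
Proof. exact: trmxCK. Qed.

Lemma H_normal : H \is normalmx.
Proof.
have HH : H^t* = H by rewrite /H trmx_mul map_mxM tr_trC.
by apply/normalmxP; rewrite HH.
Qed.

Lemma PU : P \is unitarymx. Proof. exact: spectral_unitarymx. Qed.
Lemma Punit : P \in unitmx. Proof. exact: spectral_unit. Qed.

Lemma HE : H = P^t* *m diag_mx D *m P.
Proof. by rewrite -invmx_unitary ?PU //; apply/orthomx_spectralP/H_normal. Qed.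

Lemma PtP : P^t* *m P = 1%:M.
Proof. by rewrite -invmx_unitary ?PU // mulVmx ?Punit. Qed.
Lemma PPt : P *m P^t* = 1%:M.
Proof. by rewrite -invmx_unitary ?PU // mulmxV ?Punit. Qed.

Lemma PH : P *m H = diag_mx D *m P.
Proof. by rewrite HE !mulmxA PPt mul1mx. Qed.

Lemma eig_row k : row k P *m H = D 0 k *: row k P.
Proof.
by rewrite -row_mul PH row_mul row_diag_mx -scalemxAl -rowE.
Qed.

Lemma dotH u : dot (u *m Mx) (u *m Mx) = (u *m H *m u^t*) 0 0.
Proof. by rewrite dotmxE /H trmx_mul map_mxM !mulmxA. Qed.

Lemma dot_ge0 u : 0 <= dot u u. Proof. exact: dnorm_ge0. Qed.

Lemma D_ge0 k : 0 <= D 0 k.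
Proof.
have := dot_ge0 (row k P *m Mx); rewrite dotH eig_row -scalemxAl mxE.
have : dot (row k P) (row k P) = 1 by have /row_unitarymxP := PU; move/(_ k k); rewrite eqxx.
by rewrite dotmxE => ->; rewrite mulr1.
Qed.

Lemma sumD : \sum_k D 0 k = \tr H.
Proof. by rewrite HE mxtrace_mulC mulmxA PPt mul1mx mxtrace_diag. Qed.

Lemma quad_bound (B : algC) : (forall k, D 0 k <= B) ->
  forall u, dot (u *m Mx) (u *m Mx) <= B * dot u u.
Proof.
move=> DB u; rewrite dotH HE.
set c := u *m P^t*.
have -> : u *m (P^t* *m diag_mx D *m P) *m u^t* = c *m diag_mx D *m c^t*.
  by rewrite /c trmx_mul map_mxM tr_trC !mulmxA.
have -> : dot u u = dot c c by rewrite !dotmxE /c trmx_mul map_mxM tr_trC !mulmxA -(mulmxA u) PtP mulmx1.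
move: c => c; rewrite dotmxE mul_mx_diag !mxE mulr_sumr; apply: ler_sum => k _.
rewrite !mxE mulrAC [B * _]mulrC ler_wpM2l //.
exact: mul_conjC_ge0.
Qed.

Lemma eig_rank (a : algC) : 0 <= a ->
  (\rank (eigenspace H a))%:R * a <= \sum_k D 0 k.
Proof.
move=> a0.
pose S := [set k | D 0 k == a].
pose E : 'M_(#|S|, n) := \matrix_(j < #|S|) row (enum_val j) P.
have rowE_S k : k \in S -> (row k P <= E)%MS.
  move=> kS; have := row_sub (enum_rank_in kS k) E.
  by rewrite rowK enum_rankK_in.
have sub : (eigenspace H a <= E)%MS.
  apply/row_subP => i.
  have /eigenspaceP vH := row_sub i (eigenspace H a).
  set v := row i _ in vH *.
  set c := v *m P^t*.
  have vE : v = c *m P by rewrite /c -mulmxA PtP mulmx1.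
  have cD : c *m diag_mx D = a *: c.
    apply: (can_inj (mulmxK Punit)).
    by rewrite -mulmxA -PH mulmxA -vE vH vE scalemxAl.
  move: c vE cD => c vE cD.
  rewrite vE mulmx_sum_row; apply: summx_sub => k _.
  have [kS | nkS] := boolP (k \in S); first exact/scalemx_sub/rowE_S.
  have : (c *m diag_mx D) 0 k = (a *: c) 0 k by rewrite cD.
  rewrite mul_mx_diag !mxE mulrC => /eqP; rewrite -subr_eq0 -mulrBl mulf_eq0 subr_eq0.
  rewrite inE in nkS; rewrite (negPf nkS) /= => /eqP ->.
  by rewrite scale0r sub0mx.
have rk : (\rank (eigenspace H a) <= #|S|)%N.
  exact: leq_trans (mxrankS sub) (rank_leq_row _).
apply: le_trans (_ : #|S|%:R * a <= _).
  by rewrite ler_wpM2r // ler_nat.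
rewrite (bigID (mem S)) /= -[X in X <= _]addr0 lerD //; last first.
  by apply: sumr_ge0 => k _; apply: D_ge0.
rewrite -sum1_card natr_sum mulr_suml le_eqVlt; apply/orP; left; apply/eqP.
by apply: eq_bigr => k; rewrite inE => /eqP ->; rewrite mul1r.
Qed.

End Spec.
Section S.
Variables (gT : finGroupType) (G : {group gT}) (f : gT -> algC).
Local Notation nG := (gcard G).
Local Notation aG := (regular_repr algC G).
Definition ev (i : 'I_nG) : gT := enum_val i.
Lemma evP i : ev i \in G. Proof. exact: enum_valP. Qed.
Definition Mf : 'M[algC]_nG := \matrix_(i, j) f (ev j * (ev i)^-1)%g.

Lemma aGE x i k : aG x i k = (k == gring_index G (ev i * x)%g)%:R.
Proof. by rewrite /= /regular_mx !mxE. Qed.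

Lemma sumV (F : gT -> algC) : \sum_(x in G) F (x^-1)%g = \sum_(x in G) F x.
Proof.
rewrite [RHS](reindex_inj invg_inj) /=; apply: eq_bigl => x; by rewrite groupV.
Qed.

Lemma comm_aG x : x \in G -> aG x *m Mf = Mf *m aG x.
Proof.
move=> Gx; apply/matrixP=> i j; rewrite !mxE.
rewrite (bigD1 (gring_index G (ev i * x)%g)) //= big1 => [|k /negbTE nk]; last first.
  by rewrite aGE nk mul0r.
rewrite (bigD1 (gring_index G (ev j * x^-1)%g)) //= big1 => [|k nk]; last first.
  rewrite aGE; case: eqP => [Ejk|]; last by rewrite mulr0.
  case/eqP: nk; have Ej: ev j = (ev k * x)%g.
    by rewrite Ejk /ev gring_indexK // groupM ?enum_valP.
  by rewrite -(gring_valK k) -/(ev k) Ej mulgK.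
rewrite !addr0 aGE eqxx mul1r aGE.
rewrite /ev !gring_indexK ?groupM ?groupV ?enum_valP // mulgKV gring_valK eqxx mulr1 !mxE.
by rewrite /ev !gring_indexK ?groupM ?groupV ?enum_valP // invMg mulgA.
Qed.

Lemma mx1_tr m (A : 'M[algC]_m) : m = 1%N -> A = (\tr A)%:M.
Proof.
move=> E; subst m; apply/matrixP=> i j; rewrite !ord1 !mxE /mxtrace big_ord1.
by rewrite eqxx mulr1n.
Qed.

Lemma rep_bound (d : algC) : is_min_nontrivial_degree G d ->
  forall U : 'M[algC]_nG, mxmodule aG U -> U != 0 ->
  (forall w : 'rV_nG, (w <= U)%MS -> (forall x, x \in G -> w *m aG x = w) -> w = 0) ->
  d <= (\rank U)%:R.
Proof.
move=> [_ dmin] U modU nzU nofix.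
apply: (mxsimple_exists modU nzU) => -[V simV sVU].
have modV := mxsimple_module simV.
have irrV : mx_irreducible (submod_repr modV) by apply/submod_mx_irr.
have: cfRepr (submod_repr modV) \in irr G.
  by apply/irr_reprP; exists (Representation (submod_repr modV)).
case/irrP => i Ei.
have rkV : cfRepr (submod_repr modV) 1%g = (\rank V)%:R := cfRepr1 _.
have [i0 | nz_i] := eqVneq i 0; last first.
  apply: le_trans (dmin i nz_i) _; rewrite -Ei rkV ler_nat.
  exact: mxrankS.
rewrite i0 irr0 in Ei.
have: ((\rank V)%:R == 1 :> algC) by rewrite -rkV Ei cfun1E group1.
rewrite pnatr_eq1 => /eqP rk1.
pose u : 'rV[algC]_(\rank V) := const_mx 1.
have nzu : u != 0.
  have k : 'I_(\rank V) by rewrite rk1; exact: ord0.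
  apply/eqP => /rowP/(_ k); rewrite !mxE => /eqP; by rewrite oner_eq0.
have: val_submod u == 0 :> 'rV_nG; last by rewrite val_submod_eq0 (negPf nzu).
apply/eqP; apply: nofix; first by apply: submx_trans sVU; apply: val_submodP.
move=> x Gx; rewrite -val_submodJ //; congr (val_submod _).
rewrite [submod_mx _ x]mx1_tr // mul_mx_scalar.
have: cfRepr (submod_repr modV) x = 1 by rewrite Ei cfun1E Gx.
by rewrite /cfRepr cfunE Gx mulr1n /= => ->; rewrite scale1r.
Qed.
End S.

Section Main.
Variables (gT : finGroupType) (G : {group gT}) (f : gT -> algC).
Hypothesis hf : {in G, forall x, f x = 1 \/ f x = -1}.
Hypothesis hs : \sum_(x in G) f x = 0.
Local Notation nG := (gcard G).
Local Notation aG := (regular_repr algC G).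
Local Notation M := (Mf G f).
Local Notation H := (M *m M^t*).

Lemma f_conj x : x \in G -> (f x)^* = f x.
Proof. by case/hf => ->; rewrite ?rmorphN rmorph1. Qed.

Lemma f_sq x : x \in G -> f x * f x = 1.
Proof. by case/hf => ->; rewrite ?mulrNN mulr1. Qed.

Lemma MT : M^t* = Mf G (fun z => (f (z^-1)%g)^*).
Proof. by apply/matrixP => i j; rewrite !mxE invMg invgK. Qed.

Lemma H_comm x : x \in G -> aG x *m H = H *m aG x.
Proof.
by move=> Gx; rewrite mulmxA comm_aG // -!mulmxA MT comm_aG.
Qed.

Lemma eig_module a : mxmodule aG (eigenspace H a).
Proof.
apply/mxmoduleP => x Gx; apply/eigenspaceP.
by rewrite -mulmxA H_comm // mulmxA; have /eigenspaceP -> := submx_refl (eigenspace H a); rewrite scalemxAl.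
Qed.

Lemma fixed_const (w : 'rV[algC]_nG) :
  (forall x, x \in G -> w *m aG x = w) -> w = w 0 (gring_index G 1%g) *: const_mx 1.
Proof.
move=> fix_w; apply/rowP => j; rewrite !mxE mulr1.
have <- : (w *m aG (ev j)) 0 j = w 0 j by rewrite fix_w ?evP.
rewrite mxE (bigD1 (gring_index G 1%g)) //= big1 => [|k /negbTE nk]; last first.
  rewrite aGE; case: eqP => [Ej|]; last by rewrite mulr0.
  suff: k == gring_index G 1%g by rewrite nk.
  have : ev j = (ev k * ev j)%g by rewrite {1}Ej /ev gring_indexK // groupM ?enum_valP.
  by rewrite -{1}[ev j]mul1g => /mulIg Ek; rewrite -(gring_valK k) -/(ev k) -Ek.
by rewrite addr0 aGE /ev gring_indexK // mul1g gring_valK eqxx mulr1.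
Qed.

Lemma colsum : (const_mx 1 : 'rV[algC]_nG) *m M = 0.
Proof.
apply/rowP => j; rewrite !mxE.
transitivity (\sum_(x in G) f (ev j * x^-1)%g).
  by rewrite [RHS]big_enum_val; apply: eq_bigr => i _; rewrite !mxE mul1r.
rewrite (reindex_acts 'R _ (evP j)) ?astabsR //=.
under eq_bigr do rewrite invMg mulgA mulgV mul1g.
by rewrite (sumV G f).
Qed.

Lemma eig_nofix a : a != 0 -> forall w : 'rV_nG, (w <= eigenspace H a)%MS ->
  (forall x, x \in G -> w *m aG x = w) -> w = 0.
Proof.
move=> nza w /eigenspaceP wH /fixed_const wE.
move: wH; rewrite wE -scalemxAl mulmxA colsum mul0mx scaler0 => /esym/eqP.
by rewrite -wE scaler_eq0 (negPf nza) /= => /eqP.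
Qed.

Lemma trH : \tr H = (nG * nG)%:R.
Proof.
rewrite /mxtrace (eq_bigr (fun _ => nG%:R)).
  by rewrite sumr_const card_ord natrM mulr_natr.
move=> i _; rewrite !mxE (eq_bigr (fun _ => 1)).
  by rewrite sumr_const card_ord.
by move=> j _; rewrite !mxE f_conj ?f_sq // groupM ?groupV ?evP.
Qed.

Lemma D_bound d : is_min_nontrivial_degree G d ->
  forall k, spectral_diag H 0 k <= (nG * nG)%:R / d.
Proof.
move=> dmin k; have [[i0 nz0 dE] _] := dmin.
have d0 : 0 < d by rewrite dE irr1_gt0.
rewrite ler_pdivlMr //.
have Dk0 := D_ge0 M k.
have [Dk | nzD] := eqVneq (spectral_diag H 0 k) 0.
  by rewrite Dk mul0r ler0n.
have sub : (row k (spectralmx H) <= eigenspace H (spectral_diag H 0 k))%MS.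
  by apply/eigenspaceP; rewrite eig_row.
have nzrow : row k (spectralmx H) != 0.
  apply/eqP => r0; have := PU M; move/row_unitarymxP => h; move: (h k k).
  by rewrite eqxx r0 dotmxE mul0mx mxE => /eqP; rewrite eq_sym oner_eq0.
have nzE : eigenspace H (spectral_diag H 0 k) != 0.
  by apply/eqP => E0; move: sub; rewrite E0 submx0 (negPf nzrow).
have := rep_bound dmin (eig_module _) nzE (@eig_nofix _ nzD).
move=> dr; rewrite mulrC; apply: le_trans (ler_wpM2r Dk0 dr) _.
by apply: le_trans (eig_rank M Dk0) _; rewrite sumD trH.
Qed.
End Main.

Section Final.
Variables (gT : finGroupType) (G : {group gT}) (f : gT -> algC).
Hypothesis hf : {in G, forall x, f x = 1 \/ f x = -1}.
Hypothesis hs : \sum_(x in G) f x = 0.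
Local Notation nG := (gcard G).
Local Notation M := (Mf G f).
Local Notation H := (M *m M^t*).
Let F : 'rV[algC]_nG := \row_(j < nG) f (ev j).
Let S0 := \sum_(x in G) \sum_(y in G) f x * f y * f (x * y)%g.

Lemma dotF : dotmx F F = nG%:R.
Proof.
rewrite dotmxE !mxE (eq_bigr (fun _ => 1)) ?sumr_const ?card_ord //.
by move=> j _; rewrite !mxE (f_conj hf) ?(f_sq hf) ?evP.
Qed.

Lemma dotS : dotmx (F *m M) F = S0.
Proof.
rewrite dotmxE mxE.
rewrite (eq_bigr (fun j => \sum_i F 0 i * M i j * f (ev j))); last first.
  by move=> j _; rewrite !mxE (f_conj hf) ?evP // mulr_suml.
rewrite exchange_big /= /S0 [RHS]exchange_big /= (big_enum_val (A := mem G)).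
apply: eq_bigr => i _.
rewrite (reindex_acts 'R _ (groupVr (evP i))) ?astabsR //= [RHS]big_enum_val.
apply: eq_bigr => j _; rewrite !mxE mulgKV /ev; ring.
Qed.

Lemma S0_real : S0 \is Num.real.
Proof.
apply: rpred_sum => x Gx; apply: rpred_sum => y Gy.
have fr z : z \in G -> f z \is Num.real by case/hf => ->; rewrite ?rpredN rpred1.
by rewrite !rpredM ?fr ?groupM.
Qed.

Lemma S0_bound d : is_min_nontrivial_degree G d -> S0 <= (nG * nG)%:R / sqrtC d.
Proof.
move=> dmin; have [[i0 nz0 dE] _] := dmin.
have d0 : 0 < d by rewrite dE irr1_gt0.
have sd0 : 0 < sqrtC d by rewrite sqrtC_gt0.
apply: le_trans (real_ler_norm S0_real) _.
rewrite -ler_sqr ?nnegrE ?normr_ge0 ?divr_ge0 ?ler0n ?(ltW sd0) //.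
have CS := (CauchySchwarz (@dotmx algC nG) (F *m M) F).1.
rewrite /= dotS in CS.
apply: le_trans CS _.
rewrite dotF expr_div_n sqrtCK.
have QB := quad_bound (D_bound hf hs dmin) F.
rewrite dotF in QB.
apply: le_trans (ler_wpM2r (ler0n _ _) QB) _.
rewrite le_eqVlt; apply/orP; left; apply/eqP.
rewrite natrM; field; by rewrite gt_eqF.
Qed.

Lemma ind_pm (a b : algC) : (a = 1 \/ a = -1) -> (b = 1 \/ b = -1) ->
  ((a == b)%:R : algC) = (1 + a * b) / 2.
Proof.
have h : (1 == -1 :> algC) = false.
  by rewrite -subr_eq0 opprK -(natrD _ 1 1) pnatr_eq0.
have h2 : (2 : algC) != 0 by rewrite pnatr_eq0.
case=> ->; case=> ->; rewrite ?eqxx ?h ?(eq_sym (-1)) ?h ?mulr1 ?mulrN1 ?opprK ?mul1r ?subrr ?mul0r //=.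
  by rewrite divff.
by rewrite divff.
Qed.

Lemma count_eq : #|[set p in setX G G | f p.1 * f p.2 == f (p.1 * p.2)%g]|%:R
  = ((#|G| * #|G|)%:R + S0) / 2.
Proof.
rewrite -sum1_card natr_sum.
transitivity (\sum_(p in setX G G) ((f p.1 * f p.2 == f (p.1 * p.2)%g)%:R : algC)).
  rewrite big_mkcond [RHS]big_mkcond; apply: eq_bigr => p _; rewrite !inE.
  by case: (p.1 \in G); case: (p.2 \in G) => /=; case: (f p.1 * f p.2 == _).
rewrite (eq_bigl (fun p => (p.1 \in G) && (p.2 \in G))); last by move=> [a b]; rewrite in_setX.
rewrite -(pair_big (fun x => x \in G) (fun y => y \in G) (fun x y => ((f x * f y == f (x * y)%g)%:R : algC))) /=.
rewrite (eq_bigr (fun x => \sum_(y in G) (1 + f x * f y * f (x * y)%g) / 2)); last first.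
  move=> x Gx; apply: eq_bigr => y Gy; rewrite ind_pm ?mulrA //; last exact: hf (groupM Gx Gy).
  by case: (hf Gx) => ->; case: (hf Gy) => ->; rewrite ?mulr1 ?mulrN1 ?opprK ?mul1r; auto.
rewrite (eq_bigr (fun x => (\sum_(y in G) (1 + f x * f y * f (x * y)%g)) / 2)); last first.
  by move=> x _; rewrite mulr_suml.
rewrite -mulr_suml; congr (_ / 2).
rewrite (eq_bigr (fun x => #|G|%:R + \sum_(y in G) f x * f y * f (x * y)%g)); last first.
  by move=> x _; rewrite big_split /= sumr_const.
by rewrite big_split /= sumr_const natrM mulr_natr.
Qed.
End Final.

Theorem theorem1 (gT : finGroupType) (G : {group gT}) (f : gT -> algC) (d : algC) :
  {in G, forall x, f x = 1 \/ f x = -1} ->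
  (#|G|%:R)^-1 * \sum_(x in G) f x = 0 ->
  is_min_nontrivial_degree G d ->
  mult_prob G f <= (1 + (sqrtC d)^-1) / 2.
Proof.
move=> hf hmean dmin.
have n0 : (#|G|%:R : algC) != 0 by rewrite pnatr_eq0 -lt0n cardG_gt0.
have hs : \sum_(x in G) f x = 0.
  by move/eqP: hmean; rewrite mulf_eq0 invr_eq0 (negPf n0) /= => /eqP.
have [[i0 nz0 dE] _] := dmin.
have d0 : 0 < d by rewrite dE irr1_gt0.
have sd0 : 0 < sqrtC d by rewrite sqrtC_gt0.
have SB := S0_bound hf hs dmin.
rewrite /mult_prob (count_eq hf).
set S := \sum_(x in G) _ in SB *.
have N0 : 0 < ((#|G| * #|G|)%:R : algC) by rewrite ltr0n muln_gt0 cardG_gt0.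
set N := ((#|G| * #|G|)%:R : algC) in SB N0 *.
have -> : (N + S) / 2 / (#|G|%:R ^+ 2) = (1 + S / N) / 2.
  rewrite /N natrM; field; by rewrite n0.
rewrite ler_pM2r ?invr_gt0 ?ltr0n // lerD2l ler_pdivrMr //.
by rewrite mulrC.
Qed.
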